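(* Let $\mathcal{A}=(\Sigma,Q,I,F,\delta)$ be an NFA and let $\mathcal{A}_{\mathrm{SS}}$ be the DFA output by the subset construction with $\mathcal{A}$ as input. Then $|\mathcal{A}_{\mathrm{SS}}|\le\|\mathcal{A}\|$, where $$\|\mathcal{A}\|=\min_{\mathcal{J}\subseteq\Sigma}\left(1+\sum_{w\in\Sigma\setminus\mathcal{J}}\left|\mathcal{R}(T^{(w)})\right|\right)\left|\mathcal{M}(\mathcal{J})\right|.$$
   Context: An NFA is $\mathcal{A}=(\Sigma,Q,I,F,\delta)$ with finite alphabet $\Sigma$, finite state set $Q=\{q_1,\dots,q_n\}$, initial states $I$, accepting states $F$, transitions $\delta\subseteq Q\times\Sigma\times Q$ ($\varepsilon$-free). The Boolean semifield is $\mathbb{B}=(\{0,1\},\vee,\wedge,0,1)$. For $w\in\Sigma$ the transition matrix $T^{(w)}\in\mathbb{B}^{n\times n}$ has $T^{(w)}_{i,j}=1$ iff $(q_i,w,q_j)\in\delta$. The range $\mathcal{R}(T)$ of a Boolean matrix $T$ is $\{Tv:v\in\mathbb{B}^n\}$. For $\mathcal{J}\subseteq\Sigma$, $\mathcal{M}(\mathcal{J})$ is the monoid of $n\times n$ Boolean matrices generated by $\{T^{(w)}:w\in\mathcal{J}\}$ under Boolean matrix multiplication, containing the identity matrix. The subset construction produces the DFA $\mathcal{A}_{\mathrm{SS}}$ whose states are exactly the subsets $\mathcal{Q}\subseteq Q$ reachable from $\mathcal{Q}_I=I$ by repeatedly applying, for $w\in\Sigma$, the map $\mathcal{Q}\mapsto\{q':(q,w,q')\in\delta,\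 q\in\mathcal{Q}\}$ (including the empty set if reachable); $|\mathcal{A}_{\mathrm{SS}}|$ is its number of states. *)

(* Defs.v *)
From mathcomp Require Import all_boot.
From mathcomp Require Import boolp.

Set Implicit Arguments.
Unset Strict Implicit.
Unset Printing Implicit Defensive.

(* An n x n Boolean matrix T is encoded
   as the set of index pairs (i,j) with T_{i,j} = 1; a Boolean vector as the
   set of indices where it is 1. *)

Section NFA.
Variables (Sigma : finType) (n : nat).
Local Notation bmat := {set 'I_n * 'I_n}.
Local Notation bvec := {set 'I_n}.

Definition tmat (delta : {set 'I_n * Sigma * 'I_n}) (w : Sigma) : bmat :=
  [set p | (p.1, w, p.2) \in delta].

Definition bmul (A B : bmat) : bmat :=
  [set p | [exists k, ((p.1, k) \in A) && ((k, p.2) \in B)]].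

Definition bid : bmat := [set p | p.1 == p.2].

Definition bapp (T : bmat) (v : bvec) : bvec :=
  [set i | [exists j, ((i, j) \in T) && (j \in v)]].

Definition brange (T : bmat) : {set bvec} := [set bapp T v | v : bvec].

Definition wordmat (delta : {set 'I_n * Sigma * 'I_n}) (s : seq Sigma) : bmat :=
  foldr (fun w M => bmul (tmat delta w) M) bid s.

Definition gen_monoid (delta : {set 'I_n * Sigma * 'I_n}) (J : {set Sigma})
  : {set bmat} :=
  [set M | `[< exists s : seq Sigma, all (fun w => w \in J) s /\ M = wordmat delta s >]].

Definition ss_step (delta : {set 'I_n * Sigma * 'I_n}) (S : bvec) (w : Sigma)
  : bvec :=
  [set q' | [exists q in S, (q, w, q') \in delta]].

Definition ss_states (I : bvec) (delta : {set 'I_n * Sigma * 'I_n})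
  : {set bvec} :=
  [set S | `[< exists s : seq Sigma, S = foldl (ss_step delta) I s >]].

Definition norm_term (delta : {set 'I_n * Sigma * 'I_n}) (J : {set Sigma})
  : nat :=
  (1 + \sum_(w in ~: J) #|brange (tmat delta w)|) * #|gen_monoid delta J|.

Definition nfa_norm (delta : {set 'I_n * Sigma * 'I_n}) : nat :=
  \big[minn/norm_term delta set0]_(J : {set Sigma}) norm_term delta J.

End NFA.

(* Main.v *)
Require Import Defs.
From mathcomp Require Import all_boot.
From mathcomp Require Import boolp.

Section Proof.
Variables (Sigma : finType) (n : nat) (delta : {set 'I_n * Sigma * 'I_n}).

Definition rapp (M : {set 'I_n * 'I_n}) (Y : {set 'I_n}) : {set 'I_n} :=
  [set j | [exists i, (i \in Y) && ((i, j) \in M)]].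

Lemma rapp_word s Y : rapp (wordmat delta s) Y = foldl (ss_step delta) Y s.
Proof.
elim: s Y => [|a s IH] Y /=.
  apply/setP=> j; rewrite inE; apply/existsP/idP => [[i /andP[Hi]]|Hj].
    by rewrite inE /= => /eqP <-.
  by exists j; rewrite Hj inE /=.
rewrite -IH; apply/setP=> j; rewrite !inE.
apply/existsP/existsP => [[i /andP[Hi]]|[k /andP[]]].
  rewrite inE /= => /existsP[k /andP[H1 H2]].
  exists k; rewrite H2 andbT inE; apply/existsP; exists i.
  by rewrite Hi; rewrite inE in H1.
rewrite inE => /existsP[i /andP[Hi H1]] H2.
exists i; rewrite Hi /= inE; apply/existsP; exists k; by rewrite inE H1 H2.
Qed.

Lemma step_recover X w :
  ss_step delta X w = ss_step delta (~: bapp (tmat delta w) (~: ss_step delta X w)) w.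
Proof.
apply/setP=> q'; apply/idP/idP.
  move=> Hq; move: (Hq); rewrite inE => /existsP[q /andP[Hq1 Hq2]].
  rewrite inE; apply/existsP; exists q; rewrite Hq2 andbT !inE.
  apply/negP => /existsP[j /andP[]]; rewrite !inE /= => Hj.
  by move/negP; apply; apply/existsP; exists q; rewrite Hq1.
rewrite inE => /existsP[q /andP[]]; rewrite !inE => /negP Hn Hd.
apply: contraT => Hq; exfalso; apply: Hn; apply/existsP; exists q'.
by rewrite !inE /= Hd /=.
Qed.

Definition Aset (J : {set Sigma}) (I : {set 'I_n}) : {set {set 'I_n}} :=
  [set rapp M I | M in gen_monoid delta J] :|:
  \bigcup_(w in ~: J) [set rapp p.1 (ss_step delta (~: p.2) w)
                        | p in setX (gen_monoid delta J) (brange (tmat delta w))].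

Lemma word_in (J : {set Sigma}) s : all (fun w => w \in J) s -> wordmat delta s \in gen_monoid delta J.
Proof. by move=> Hs; rewrite inE; apply/asboolP; exists s. Qed.

Lemma reach_in (J : {set Sigma}) I s : foldl (ss_step delta) I s \in Aset J I.
Proof.
suff: exists Y u, all (fun w => w \in J) u /\ foldl (ss_step delta) I s = foldl (ss_step delta) Y u /\
   (Y = I \/ exists w c, w \notin J /\ c \in brange (tmat delta w) /\ Y = ss_step delta (~: c) w).
  move=> [Y [u [Hu [-> HY]]]]; rewrite -rapp_word.
  case: HY => [->|[w [c [Hw [Hc ->]]]]].
    by rewrite inE; apply/orP; left; apply/imsetP; exists (wordmat delta u) => //; apply: word_in.
  rewrite inE; apply/orP; right; apply/bigcupP; exists w; first by rewrite inE.
  apply/imsetP; exists (wordmat delta u, c) => //.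
  by rewrite inE /= Hc andbT; apply: word_in.
elim/last_ind: s => [|s x [Y [u [Hu [E HY]]]]].
  by exists I, [::]; split => //; split => //; left.
rewrite foldl_rcons E.
case HxJ: (x \in J).
  exists Y, (rcons u x); split; first by rewrite all_rcons HxJ Hu.
  by rewrite foldl_rcons; split.
set S := foldl _ Y u.
exists (ss_step delta (~: bapp (tmat delta x) (~: ss_step delta S x)) x), [::].
split => //; split; first by rewrite /= -step_recover.
right; exists x, (bapp (tmat delta x) (~: ss_step delta S x)); split; first by rewrite HxJ.
split => //; by apply/imsetP; exists (~: ss_step delta S x).
Qed.

Lemma card_Aset (J : {set Sigma}) I : #|Aset J I| <= norm_term delta J.
Proof.
rewrite /Aset /norm_term mulnDl mul1n.
apply: leq_trans (leq_card_setU _ _) _; apply: leq_add; first exact: leq_imset_card.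
rewrite big_distrl /=.
elim/big_ind2: _ => //.
- by rewrite cards0.
- move=> A a B b Ha Hb; apply: leq_trans (leq_card_setU _ _) _; exact: leq_add.
- move=> w _; apply: leq_trans (leq_imset_card _ _) _; by rewrite cardsX mulnC.
Qed.

End Proof.

Theorem theorem3 (Sigma : finType) (n : nat)
  (I F : {set 'I_n}) (delta : {set 'I_n * Sigma * 'I_n}) :
  #|ss_states I delta| <= nfa_norm delta.
Proof.
have H (J : {set Sigma}) : #|ss_states I delta| <= norm_term delta J.
  apply: (leq_trans _ (@card_Aset _ _ delta J I)); apply: subset_leq_card.
  apply/subsetP => S; rewrite inE => /asboolP[s ->]; exact: reach_in.
rewrite /nfa_norm; elim/big_ind: _ => //.
by move=> x y Hx Hy; rewrite leq_min Hx Hy.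
Qed.
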